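(* Let the Timehash scheme be as described in the context, with hierarchy $m_1 > m_2 > \dots > m_k$. Let a document have operating hours given by integers $0 \le s < e \le 1440$, i.e. it is open at the minutes $t$ with $s \le t < e$, and let $H(s,e)$ be its set of index keys. Then for every minute $t$ with $s \le t < e$, the query key set $Q(t)$ satisfies $Q(t) \cap H(s,e) \neq \emptyset$; that is, the document is retrieved by the point query at $t$ (zero false negatives).
   Context: Time of day is measured in minutes since midnight, $\{0,1,\dots,1439\}$. A hierarchy of measures is a sequence of positive integers $m_1 > m_2 > \dots > m_k$ with $m_k = 1$, $m_i$ dividing $m_{i-1}$ for $2 \le i \le k$, and $m_1$ dividing $1440$ (e.g. $(240,60,15,5,1)$). A level-$i$ block is a set of minutes $[a, a+m_i) = \{a, a+1, \dots, a+m_i-1\}$ with $a$ a nonnegative multiple of $m_i$ and $a + m_i \le 1440$; its key is the pair $(i,a)$. Every level-$i$ block with $i \ge 2$ is contained in a unique level-$(i-1)$ block, its parent. For a range $0 \le s < e \le 1440$ (the minutes $s,\dots,e-1$), the index key set $H(s,e)$ is the set of keys of all blocks $B$ (at any level) such that $B \subseteq [s,e)$ and either $B$ is at level 1 or the parent of $B$ is not contained in $[s,e)$ (this is the hierarchical decomposition obtained by taking the complete coarsest blocks inside the range and recursively refining the partially covered boundary blocks at finer levels). For a query minute $t$, the query key set $Q(t)$ consists of the keys of the $k$ blocks, one at each level $i=1,\dots,k$, that contain $t$. A document is retrieved by the point query at $t$ iff some query key in $Q(t)$ equals some index key of the document. *)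

(* Defs.v *)
From mathcomp Require Import all_boot.
Set Implicit Arguments. Unset Strict Implicit. Unset Printing Implicit Defensive.

Definition day_len : nat := 1440.

(* A hierarchy of measures m_1 > ... > m_k is the list ms = [:: m_1; ...; m_k].
   Levels are 1-indexed: the measure of level i is nth 0 ms i.-1. *)
Definition meas (ms : seq nat) (i : nat) : nat := nth 0 ms i.-1.

Definition hierarchy (ms : seq nat) : Prop :=
  [/\ 0 < size ms /\ (forall i, 1 <= i <= size ms -> 0 < meas ms i),
      forall i, 2 <= i <= size ms -> meas ms i < meas ms i.-1,
      forall i, 2 <= i <= size ms -> meas ms i %| meas ms i.-1,
      meas ms (size ms) = 1
    & meas ms 1 %| day_len].

(* A key is a pair (i, a): level i, start minute a. *)
Definition key := (nat * nat)%type.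

Definition is_block (ms : seq nat) (kk : key) : Prop :=
  let: (i, a) := kk in
  [/\ 1 <= i <= size ms, meas ms i %| a & a + meas ms i <= day_len].

Definition block_in (ms : seq nat) (kk : key) (s e : nat) : Prop :=
  let: (i, a) := kk in s <= a /\ a + meas ms i <= e.

(* Parent of a level-i block (i >= 2): the unique level-(i-1) block containing it. *)
Definition parent (ms : seq nat) (kk : key) : key :=
  let: (i, a) := kk in (i.-1, a - a %% meas ms i.-1).

Definition H (ms : seq nat) (s e : nat) (kk : key) : Prop :=
  [/\ is_block ms kk, block_in ms kk s e &
      (kk.1 = 1 \/ ~ block_in ms (parent ms kk) s e)].

Definition Q (ms : seq nat) (t : nat) (kk : key) : Prop :=
  let: (i, a) := kk in 1 <= i <= size ms /\ a = t - t %% meas ms i.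

(* Main.v *)
Require Import Defs.
From mathcomp Require Import all_boot.

Lemma sub_mod x m : x - x %% m = x %/ m * m.
Proof. by rewrite {1}(divn_eq x m) addnK. Qed.

Lemma meas_dvd ms : hierarchy ms ->
  forall i, 1 <= i <= size ms -> meas ms i %| day_len.
Proof.
case=> [[_ _] _ hd _ h1]; elim=> [|i IH] //; case: i IH => [|i] IH // hi.
case/andP: hi => _ hi.
apply: dvdn_trans (hd i.+2 _) _; first by rewrite hi.
by apply: IH; rewrite /= ltnW.
Qed.

Theorem theorem1 (ms : seq nat) (s e t : nat) :
  hierarchy ms -> s < e -> e <= day_len -> s <= t < e ->
  exists kk : key, Q ms t kk /\ H ms s e kk.
Proof.
move=> hh hse hed /andP[hst hte].
have hh' := hh; case: hh' => [[hsz hpos] hlt hdv hk h1].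
pose b i := t - t %% meas ms i.
pose P i := [&& 1 <= i <= size ms, s <= b i & b i + meas ms i <= e].
have exP : exists i, P i.
  exists (size ms); rewrite /P /b hk modn1 subn0 addn1 hst hte leqnn andbT.
  by rewrite -(prednK hsz).
case: (ex_minnP exP) => i /and3P[hi hs he] hmin.
exists (i, b i); split; first by split.
have mpos : 0 < meas ms i by apply: hpos.
split.
- split => //; first by rewrite /b sub_mod dvdn_mull.
  have /dvdnP[c hc] := @meas_dvd ms hh i hi.
  rewrite /b sub_mod -mulSnr hc leq_mul2r; apply/orP; right.
  rewrite ltn_divLR // -hc; apply: leq_trans hte hed.
- by [].
- case: i hi hs he hmin mpos => [|[|i]] hi hs he hmin mpos; [by []|by left|right].
  move=> /= [hs' he'].
  have hi1 : 1 <= i.+1 <= size ms by rewrite /= ltnW //; case/andP: hi.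
  have hM := hdv i.+2 hi; rewrite /= in hM.
  have Mpos : 0 < meas ms i.+1 by apply: hpos.
  have eqb : b i.+2 - b i.+2 %% meas ms i.+1 = b i.+1.
    case/dvdnP: hM => c hc.
    rewrite /b !sub_mod; congr (_ * _).
    by rewrite hc [c * _]mulnC !divnMA mulnK.
  rewrite eqb in hs' he'.
  have : P i.+1 by rewrite /P hi1 hs' he'.
  by move/hmin; rewrite ltnn.
Qed.
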